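(* Let $F\colon\mathbf{Ring}^{\mathrm{op}}\to\mathbf{Loc}$ be any functor whose restriction to commutative rings is naturally isomorphic to the Pierce spectrum functor. Then $F(R)$ is the trivial locale for every Kochen--Specker ring $R$; in particular $F(M_n(\mathbb{C}))$ is trivial for all $n\ge 3$.
   Context: $\mathbf{Ring}$ is the category of unital rings and unital ring homomorphisms; $\mathbf{Loc}$ is the category of locales. The Pierce spectrum of a commutative ring $R$ is the Stone spectrum of its boolean algebra $E(R)$ of idempotents, i.e. the locale whose frame is the ideal frame $\mathrm{Idl}(E(R))$. A locale is trivial if its frame satisfies $0=1$. A ring $R$ is Kochen--Specker if there is a ring homomorphism $M_n(\mathbb{C})\to R$ for some $n\ge 3$, where $M_n(\mathbb{C})$ is the ring of $n\times n$ complex matrices. *)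

(* Defs.v *)
From HB Require Import structures.
From mathcomp Require Import all_boot all_algebra.
From Stdlib Require Import Reals Lra ClassicalEpsilon FunctionalExtensionality.
Set Implicit Arguments. Unset Strict Implicit.
Unset Printing Implicit Defensive.
Import GRing.Theory.

Definition Rfind (P : pred R) (n : nat) : option R :=
  match excluded_middle_informative (exists x, P x) with
  | left _ => Some (epsilon (inhabits 0%R) (fun x => P x))
  | right _ => None end.
Lemma Rfind_correct P n x : Rfind P n = Some x -> P x.
Proof. rewrite /Rfind; case: excluded_middle_informative => // H [<-].
by apply: (epsilon_spec (inhabits 0%R) (fun x => P x)). Qed.
Lemma Rfind_complete (P : pred R) : (exists x, P x) -> exists n, Rfind P n.
Proof. move=> H; exists 0%N; rewrite /Rfind; case: excluded_middle_informative. by []. by []. Qed.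
Lemma Rfind_ext (P Q : pred R) : P =1 Q -> Rfind P =1 Rfind Q.
Proof. move=> H n; have -> // : P = Q by apply: functional_extensionality. Qed.
Lemma Req_axiom : Equality.axiom (fun x y : R => if Req_EM_T x y then true else false).
Proof. move=> x y; case: Req_EM_T => H; [by constructor | by constructor]. Qed.
HB.instance Definition _ := hasDecEq.Build R Req_axiom.
HB.instance Definition _ := hasChoice.Build R Rfind_correct Rfind_complete Rfind_ext.

Record Cplx := Cpx { cre : R ; cim : R }.
Definition Cplx_to (z : Cplx) : R * R := (cre z, cim z).
Definition Cplx_of (p : R * R) : Cplx := Cpx p.1 p.2.
Lemma Cplx_toK : cancel Cplx_to Cplx_of. Proof. by case. Qed.
HB.instance Definition _ := Choice.copy Cplx (can_type Cplx_toK).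

Definition C0 := Cpx 0%R 0%R.
Definition Cadd z w := Cpx (cre z + cre w)%R (cim z + cim w)%R.
Definition Copp z := Cpx (- cre z)%R (- cim z)%R.
Definition C1 := Cpx 1%R 0%R.
Definition Cmul z w := Cpx (cre z * cre w - cim z * cim w)%R (cre z * cim w + cim z * cre w)%R.

Lemma CaddA : associative Cadd.
Proof. by move=> [a b] [c d] [e f]; rewrite /Cadd /=; congr Cpx; ring. Qed.
Lemma CaddC : commutative Cadd.
Proof. by move=> [a b] [c d]; rewrite /Cadd /=; congr Cpx; ring. Qed.
Lemma Cadd0 : left_id C0 Cadd.
Proof. by move=> [a b]; rewrite /Cadd /=; congr Cpx; ring. Qed.
Lemma CaddN : left_inverse C0 Copp Cadd.
Proof. by move=> [a b]; rewrite /Cadd /=; congr Cpx; ring. Qed.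
HB.instance Definition _ := GRing.isZmodule.Build Cplx CaddA CaddC Cadd0 CaddN.
Lemma CmulA : associative Cmul.
Proof. by move=> [a b] [c d] [e f]; rewrite /Cmul /=; congr Cpx; ring. Qed.
Lemma CmulC : commutative Cmul.
Proof. by move=> [a b] [c d]; rewrite /Cmul /=; congr Cpx; ring. Qed.
Lemma Cmul1 : left_id C1 Cmul.
Proof. by move=> [a b]; rewrite /Cmul /=; congr Cpx; ring. Qed.
Lemma CmulDl : left_distributive Cmul Cadd.
Proof. by move=> [a b] [c d] [e f]; rewrite /Cmul /Cadd /=; congr Cpx; ring. Qed.
Lemma C1_neq0 : C1 != C0.
Proof. apply/eqP=> -[] H; apply: R1_neq_R0; exact: H. Qed.
HB.instance Definition _ := GRing.Zmodule_isComNzRing.Build Cplx CmulA CmulC Cmul1 CmulDl C1_neq0.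

Local Open Scope ring_scope.

(** * Frames (= locales, via their frames of opens) *)
Record Frame := MkFrame {
  fcar :> Type;
  fle : fcar -> fcar -> Prop;
  ftop : fcar;
  fmeet : fcar -> fcar -> fcar;
  fjoin : (fcar -> Prop) -> fcar;
  fle_refl : forall x, fle x x;
  fle_trans : forall x y z, fle x y -> fle y z -> fle x z;
  fle_antisym : forall x y, fle x y -> fle y x -> x = y;
  ftop_max : forall x, fle x ftop;
  fmeet_glb : forall x y z, fle z (fmeet x y) <-> (fle z x /\ fle z y);
  fjoin_lub : forall (S : fcar -> Prop) z, fle (fjoin S) z <-> (forall x, S x -> fle x z);
  fdistr : forall a (S : fcar -> Prop),
      fmeet a (fjoin S) = fjoin (fun y => exists x, S x /\ y = fmeet a x)
}.

Definition fbot (L : Frame) : L := fjoin (fun _ : L => False).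

Definition locale_trivial (L : Frame) : Prop := ftop L = fbot L.

Definition frame_hom (A B : Frame) (h : A -> B) : Prop :=
  [/\ h (ftop A) = ftop B,
      (forall x y, h (fmeet x y) = fmeet (h x) (h y)) &
      (forall S : A -> Prop, h (fjoin S) = fjoin (fun y => exists x, S x /\ y = h x))].

(** A locale map F(S) -> F(R) is a frame homomorphism O(F R) -> O(F S), so a
    ring homomorphism f : R -> S is sent to a frame homomorphism
    Fmap f : Fobj R -> Fobj S.  Rings are unital (possibly zero, possibly
    noncommutative) rings: MathComp's pzRingType. *)
Record RingLocFunctor := MkRingLocFunctor {
  Fobj : pzRingType -> Frame;
  Fmap : forall (R S : pzRingType), {rmorphism R -> S} -> Fobj R -> Fobj S;
  Fmap_hom : forall (R S : pzRingType) (f : {rmorphism R -> S}), frame_hom (Fmap f);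
  Fmap_id : forall (R : pzRingType) (f : {rmorphism R -> R}),
      f =1 (fun x => x) -> forall x, Fmap f x = x;
  Fmap_comp : forall (R S T : pzRingType) (f : {rmorphism R -> S})
      (g : {rmorphism S -> T}) (h : {rmorphism R -> T}),
      h =1 g \o f -> forall x, Fmap h x = Fmap g (Fmap f x)
}.

(** * The Pierce spectrum: the ideal frame Idl(E(R)) of the boolean algebra of
    idempotents of a commutative ring R.  In E(R): e /\ f = e f, e \/ f = e + f - e f,
    e <= f iff e f = e.  An ideal is represented by its underlying subset of R;
    the order of Idl(E(R)) is inclusion. *)
Definition idempotent (R : comPzRingType) (e : R) : Prop := e * e = e.

Definition bool_ideal (R : comPzRingType) (I : R -> Prop) : Prop :=
  [/\ (forall e, I e -> idempotent e),
      I 0,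
      (forall e f, I e -> I f -> I (e + f - e * f)) &
      (forall e g, I e -> idempotent g -> g * e = g -> I g)].

Definition ideal_gen (R : comPzRingType) (U : R -> Prop) : R -> Prop :=
  fun e => forall J : R -> Prop, bool_ideal J -> (forall u, U u -> J u) -> J e.

Definition pierce_map (R S : comPzRingType) (f : {rmorphism R -> S})
  (I : R -> Prop) : S -> Prop :=
  ideal_gen (fun u => exists i, I i /\ u = f i).

(** F restricted to commutative rings is naturally isomorphic to the Pierce
    spectrum functor: there are frame isomorphisms alpha_R : O(F R) -> Idl(E R)
    (bijective frame homomorphisms), natural in R. *)
Definition restricts_to_pierce (F : RingLocFunctor) : Prop :=
  exists alpha : forall R : comPzRingType, Fobj F R -> (R -> Prop),
  [/\ (forall (R : comPzRingType) x, bool_ideal (alpha R x)),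
      (forall (R : comPzRingType) x y, (forall e, alpha R x e <-> alpha R y e) -> x = y),
      (forall (R : comPzRingType) (I : R -> Prop), bool_ideal I ->
          exists x, forall e, alpha R x e <-> I e),
      [/\ (forall (R : comPzRingType) e, alpha R (ftop _) e <-> idempotent e),
          (forall (R : comPzRingType) x y e,
              alpha R (fmeet x y) e <-> (alpha R x e /\ alpha R y e)) &
          (forall (R : comPzRingType) (S : Fobj F R -> Prop) e,
              alpha R (fjoin S) e <-> ideal_gen (fun u => exists x, S x /\ alpha R x u) e)] &
      (forall (R S : comPzRingType) (f : {rmorphism R -> S}) x e,
          alpha S (@Fmap F R S f x) e <-> pierce_map f (alpha R x) e)].

Definition kochen_specker (R : pzRingType) : Prop :=
  exists n : nat, (3 <= n)%nat /\ inhabited {rmorphism 'M[Cplx]_n -> R}.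

(* Main.v *)
Require Import Defs.
From HB Require Import structures.
From Stdlib Require Import Reals Lra ClassicalEpsilon FunctionalExtensionality PropExtensionality.
From mathcomp Require Import all_boot all_order all_algebra.
From mathcomp Require Import fingroup perm.
From mathcomp Require Import ring.
Set Implicit Arguments. Unset Strict Implicit. Unset Printing Implicit Defensive.
Import Order.TTheory GRing.Theory Num.Theory.
Section Lat.
Variable L : Frame.

Lemma fle_top_eq (x : L) : fle (ftop L) x -> x = ftop L.
Proof. move=> H; apply: fle_antisym => //; exact: ftop_max. Qed.

Lemma fbot_min (x : L) : fle (fbot L) x.
Proof. by rewrite /fbot; apply/fjoin_lub. Qed.

Lemma fle_bot_eq (x : L) : fle x (fbot L) -> x = fbot L.
Proof. move=> H; apply: fle_antisym => //; exact: fbot_min. Qed.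

Lemma fmeet_l (x y : L) : fle (fmeet x y) x.
Proof. by have /fmeet_glb[] := fle_refl (fmeet x y). Qed.
Lemma fmeet_r (x y : L) : fle (fmeet x y) y.
Proof. by have /fmeet_glb[] := fle_refl (fmeet x y). Qed.

Lemma fmeet_comm (x y : L) : fmeet x y = fmeet y x.
Proof. by apply: fle_antisym; apply/fmeet_glb; split; [exact: fmeet_r|exact: fmeet_l|exact: fmeet_r|exact: fmeet_l]. Qed.

Lemma fle_join (S : L -> Prop) x : S x -> fle x (fjoin S).
Proof. move=> Sx; by have /fjoin_lub := fle_refl (fjoin S); apply. Qed.

Lemma meet_join_bot (m : L) (S : L -> Prop) :
  (forall z, S z -> fle (fmeet m z) (fbot L)) -> fle (fmeet m (fjoin S)) (fbot L).
Proof.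
move=> H; rewrite fdistr; apply/fjoin_lub => y [x [Sx ->]]; exact: H.
Qed.

Lemma meet_top_le (m : L) (S : L -> Prop) :
  fle (ftop L) (fjoin S) ->
  (forall z, S z -> fle (fmeet m z) (fbot L)) -> fle m (fbot L).
Proof.
move=> Ht H; apply: fle_trans (meet_join_bot H).
apply/fmeet_glb; split; first exact: fle_refl.
exact: fle_trans (ftop_max m) Ht.
Qed.

Variables (a : nat -> L) (r : L) (ctx : seq (nat * nat * nat)) (orth : nat -> nat -> bool).
Hypothesis Hctx : forall c, c \in ctx ->
  fle (ftop L) (fjoin (fun z => z = a c.1.1 \/ z = a c.1.2 \/ z = a c.2 \/ z = r)).
Hypothesis Horth : forall i j, orth i j -> fle (fmeet (a i) (a j)) (fbot L).
Hypothesis Hr : forall i, fle (fmeet (a i) r) (fbot L).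

Inductive cert := Leaf of nat & nat | Node of nat & cert & cert & cert.

Fixpoint check (S : seq nat) (t : cert) : bool :=
  match t with
  | Leaf i j => [&& i \in S, j \in S & orth i j]
  | Node c t1 t2 t3 =>
      let x := nth (0,0,0)%N ctx c in
      [&& (c < size ctx)%N, check (x.1.1 :: S) t1, check (x.1.2 :: S) t2
        & check (x.2 :: S) t3]
  end.

Definition meetS (S : seq nat) : L := foldr (fun i m => fmeet (a i) m) (ftop L) S.

Lemma meetS_le S i : i \in S -> fle (meetS S) (a i).
Proof.
elim: S => //= j S IH; rewrite inE => /orP[/eqP->|/IH H]; first exact: fmeet_l.
exact: fle_trans (fmeet_r _ _) H.
Qed.

Lemma check_sound t : forall S, S <> [::] -> check S t -> fle (meetS S) (fbot L).
Proof.
elim: t => [i j|c t1 IH1 t2 IH2 t3 IH3] S HS /=.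
  case/and3P=> Hi Hj Ho; apply: fle_trans (Horth Ho).
  by apply/fmeet_glb; split; apply: meetS_le.
case/and4P=> Hc H1 H2 H3.
have Hin : nth (0,0,0)%N ctx c \in ctx by apply: mem_nth.
apply: meet_top_le (Hctx Hin) _ => z [->|[->|[->|->]]].
- by rewrite fmeet_comm; exact: (IH1 (_ :: S)).
- by rewrite fmeet_comm; exact: (IH2 (_ :: S)).
- by rewrite fmeet_comm; exact: (IH3 (_ :: S)).
- case: S HS {H1 H2 H3} => // s S _ /=.
  apply: fle_trans (Hr s); apply/fmeet_glb; split; last exact: fmeet_r.
  exact: fle_trans (fmeet_l _ _) (fmeet_l _ _).
Qed.
End Lat.

Local Open Scope ring_scope.

Lemma natC (N : nat) : (N%:R : Cplx) = Cpx (INR N) (INR 0).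
Proof.
elim: N => [|N IH]; first by [].
rewrite mulrSr IH S_INR /GRing.add /= /Cadd /=; congr Cpx; lra.
Qed.

Definition cinv (N : nat) : Cplx := Cpx (Rinv (INR N)) (INR 0).

Lemma cinvP (N : nat) : (0 < N)%N -> (N%:R : Cplx) * cinv N = 1.
Proof.
move=> HN; rewrite natC /GRing.mul /= /Cmul /= /C1.
have H := @not_0_INR N ltac:(by case: N HN).
congr Cpx; simpl; [rewrite Rinv_r //; lra | lra].
Qed.

Definition v3 := (int * int * int)%type.
Definition compn (v : v3) (k : nat) : int := nth 0 [:: v.1.1; v.1.2; v.2] k.
Definition dotz (u v : v3) : int := u.1.1 * v.1.1 + u.1.2 * v.1.2 + u.2 * v.2.
Definition cv (v : v3) (k : nat) : Cplx := (compn v k)%:~R.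
Definition Muv (u v : v3) : 'M[Cplx]_3 := \matrix_(i, j) (cv u i * cv v j).
Definition cN (v : v3) : nat := absz (dotz v v).
Definition Pv (v : v3) : 'M[Cplx]_3 := cinv (cN v) *: Muv v v.

Lemma sum3 (F : 'I_3 -> Cplx) : \sum_(k < 3) F k = F ord0 + F (inord 1) + F (inord 2).
Proof.
rewrite !big_ord_recl big_ord0 addr0 addrA; congr (F _ + F _ + F _); apply: val_inj => //=;
  by rewrite inordK.
Qed.

Lemma dotC (u v : v3) : (dotz u v)%:~R = \sum_(k < 3) cv u k * cv v k :> Cplx.
Proof.
rewrite sum3 /dotz /cv !inordK // !rmorphD !rmorphM /=.
by [].
Qed.

Lemma Muv_mul (a b c d : v3) : Muv a b *m Muv c d = (dotz b c)%:~R *: Muv a d.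
Proof.
apply/matrixP => i j; rewrite !mxE dotC mulr_suml; apply: eq_bigr => k _.
by rewrite !mxE; ring.
Qed.

Lemma Nz_pos (v : v3) : (0 < dotz v v) -> dotz v v = (cN v)%:Z.
Proof. by move=> H; rewrite /cN gez0_abs // ltW. Qed.

Lemma cNC (v : v3) : (0 < dotz v v) -> (dotz v v)%:~R = (cN v)%:R :> Cplx.
Proof. by move=> H; rewrite Nz_pos. Qed.

Lemma cN_pos (v : v3) : (0 < dotz v v) -> (0 < cN v)%N.
Proof. by move=> H; move: (H); rewrite Nz_pos. Qed.

Lemma Pv_mul u v : Pv u *m Pv v = (cinv (cN u) * cinv (cN v) * (dotz u v)%:~R) *: Muv u v.
Proof. by rewrite /Pv -scalemxAl -scalemxAr Muv_mul !scalerA. Qed.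

Lemma Pv_orth u v : dotz u v = 0 -> Pv u *m Pv v = 0.
Proof. by move=> H; rewrite Pv_mul H mulr0 scale0r. Qed.

Lemma Pv_idm v : (0 < dotz v v) -> Pv v *m Pv v = Pv v.
Proof.
move=> H; rewrite Pv_mul cNC // /Pv; congr (_ *: _); rewrite -mulrA (mulrC (cinv (cN v)) ((cN v)%:R)) cinvP ?mulr1 //.
exact: cN_pos.
Qed.

Lemma tri_gen (cu cv cw nu nv nw x y z d : Cplx) :
  cu * nu = 1 -> cv * nv = 1 -> cw * nw = 1 ->
  nv * nw * x + nu * nw * y + nu * nv * z = nu * nv * nw * d ->
  cu * x + cv * y + cw * z = d.
Proof.
move=> Hu Hv Hw H.
have E1 : cu * cv * cw * (nv * nw * x + nu * nw * y + nu * nv * z) =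
  cu * x * ((cv * nv) * (cw * nw)) + cv * y * ((cu * nu) * (cw * nw)) +
  cw * z * ((cu * nu) * (cv * nv)) by ring.
have E2 : cu * cv * cw * (nu * nv * nw * d) = d * ((cu * nu) * (cv * nv) * (cw * nw)) by ring.
by move: E1; rewrite H E2 Hu Hv Hw !mulr1 => ->.
Qed.

Definition tri_ok (u v w : v3) : bool :=
  all (fun i => all (fun j =>
    dotz v v * dotz w w * (compn u i * compn u j) +
    dotz u u * dotz w w * (compn v i * compn v j) +
    dotz u u * dotz v v * (compn w i * compn w j) ==
    dotz u u * dotz v v * dotz w w * (i == j)%:Z) (iota 0 3)) (iota 0 3).

Lemma Pv_tri u v w : 0 < dotz u u -> 0 < dotz v v -> 0 < dotz w w -> tri_ok u v w ->
  Pv u + Pv v + Pv w = 1%:M.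
Proof.
move=> Hu Hv Hw /allP Ht; apply/matrixP => i j; rewrite !mxE.
have /allP := Ht i ltac:(by rewrite mem_iota add0n leq0n ltn_ord).
move=> /(_ j ltac:(by rewrite mem_iota add0n leq0n ltn_ord)) /eqP /(congr1 (fun z : int => z%:~R : Cplx)).
rewrite !rmorphD !rmorphM /= !cNC //.
have -> : ((i == j)%:Z)%:~R = ((i == j)%:R : Cplx) by case: (i == j).
move=> H; apply: (tri_gen _ _ _ H); rewrite mulrC; apply: cinvP; exact: cN_pos.
Qed.

Section Emb.
Variable n : nat.
Variable f : 'I_3 -> 'I_n.
Hypothesis finj : injective f.

Definition Vm : 'M[Cplx]_(n, 3) := \matrix_(i, a) (i == f a)%:R.

Lemma VtV : Vm^T *m Vm = 1%:M.
Proof.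
apply/matrixP => a b; rewrite !mxE (bigD1 (f a)) //= big1 => [|i Hi].
  by rewrite !mxE eqxx mul1r addr0 (inj_eq finj).
by rewrite !mxE (negbTE Hi) mul0r.
Qed.

Definition emb (P : 'M[Cplx]_3) : 'M[Cplx]_n := Vm *m P *m Vm^T.

Lemma emb_mul P Q : emb P *m emb Q = emb (P *m Q).
Proof.
by rewrite /emb !mulmxA -(mulmxA (Vm *m P)) VtV mulmx1.
Qed.

Lemma emb_add P Q : emb (P + Q) = emb P + emb Q.
Proof. by rewrite /emb mulmxDr mulmxDl. Qed.

Lemma emb0 : emb 0 = 0.
Proof. by rewrite /emb mulmx0 mul0mx. Qed.

Lemma emb_delta : emb (delta_mx 0 0) = delta_mx (f 0) (f 0).
Proof.
apply/matrixP => i j; rewrite !mxE (bigD1 0) //= big1 => [|k Hk]; last first.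
  by rewrite !mxE big1 ?mul0r // => l _; rewrite !mxE (negbTE Hk) andbF mulr0.
rewrite addr0 !mxE (bigD1 0) //= big1 => [|l Hl]; last by rewrite !mxE (negbTE Hl) mulr0.
rewrite !mxE !eqxx addr0 mulr1.
by case: (i == f 0); case: (j == f 0); rewrite ?mulr1 ?mulr0 ?mul0r.
Qed.
End Emb.

HB.instance Definition _ (k : nat) :=
  GRing.PzRing_hasCommutativeMul.Build {ffun 'I_k -> int} (@ffun_mulC _ _).
Definition D (k : nat) : comPzRingType := {ffun 'I_k -> int}.
Definition ev (k : nat) (i : 'I_k) : D k := [ffun j => (j == i)%:R].

Definition ofam (A : pzRingType) k (Q : 'I_k -> A) : Prop :=
  [/\ forall i, Q i * Q i = Q i, forall i j, i != j -> Q i * Q j = 0 & \sum_i Q i = 1].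

Definition phi (A : pzRingType) k (Q : 'I_k -> A) (H : ofam Q) (c : D k) : A :=
  \sum_i Q i *~ c i.

Lemma phi_zmod (A : pzRingType) k (Q : 'I_k -> A) (H : ofam Q) : GRing.zmod_morphism (phi H).
Proof.
move=> c d; rewrite /phi -sumrB; apply: eq_bigr => i _.
by rewrite !ffunE mulrzBr.
Qed.

Lemma phi_monoid (A : pzRingType) k (Q : 'I_k -> A) (H : ofam Q) : GRing.monoid_morphism (phi H).
Proof.
case: H => Hi Ho Hs; split.
  by rewrite /phi -Hs; apply: eq_bigr => i _; rewrite ffunE.
move=> c d; rewrite /phi mulr_suml; apply: eq_bigr => i _.
rewrite mulr_sumr (bigD1 i) //= big1 ?addr0.
  by rewrite ffunE mulrzAl mulrzAr Hi -mulrzA mulrC.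
move=> j /negbTE Hj; rewrite mulrzAl mulrzAr Ho ?mul0rz //.
by rewrite eq_sym Hj.
Qed.

HB.instance Definition _ (A : pzRingType) k (Q : 'I_k -> A) (H : ofam Q) :=
  GRing.isZmodMorphism.Build (D k) A (phi H) (phi_zmod H).
HB.instance Definition _ (A : pzRingType) k (Q : 'I_k -> A) (H : ofam Q) :=
  GRing.isMonoidMorphism.Build (D k) A (phi H) (phi_monoid H).

Definition idem_fix (A : pzRingType) (Q : A) : A := if Q * Q == Q then Q else 0.

Lemma idem_fixP (A : pzRingType) (Q : A) : idem_fix Q * idem_fix Q = idem_fix Q.
Proof. by rewrite /idem_fix; case: eqP => // _; rewrite mulr0. Qed.

Definition fam2 (A : pzRingType) (Q : A) (i : 'I_2) : A :=
  if i == ord0 then idem_fix Q else 1 - idem_fix Q.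

Lemma I2_cases (i : 'I_2) : i = ord0 \/ i = ord_max.
Proof. case: i => [[|[|m]] Hm]; [left|right|by []]; exact: val_inj. Qed.

Lemma fam2_ofam (A : pzRingType) (Q : A) : ofam (fam2 Q).
Proof.
have H := idem_fixP Q; set P := idem_fix Q in H *.
split.
- move=> i; case: (I2_cases i) => ->; rewrite /fam2 /= -/P //.
  by rewrite mulrBl mul1r mulrBr mulr1 H subrr subr0.
- move=> i j; case: (I2_cases i) => ->; case: (I2_cases j) => -> //= _;
    rewrite /fam2 /= -/P.
    by rewrite mulrBr mulr1 H subrr.
  by rewrite mulrBl mul1r H subrr.
- by rewrite big_ord_recl big_ord1 /fam2 /= addrC subrK.
Qed.

Definition psi (A : pzRingType) (Q : A) : {rmorphism D 2 -> A} := phi (fam2_ofam Q).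

Definition down (R : comPzRingType) (e : R) : R -> Prop :=
  fun g => Defs.idempotent g /\ g * e = g.

Lemma idem_join (R : comPzRingType) (e f : R) : Defs.idempotent e -> Defs.idempotent f ->
  Defs.idempotent (e + f - e * f).
Proof.
rewrite /Defs.idempotent => He Hf; apply/eqP; rewrite -subr_eq0.
have -> : (e + f - e * f) * (e + f - e * f) - (e + f - e * f) =
  (e * e - e) * (1 + f * f - f - f) + (f * f - f) * (1 - e) by ring.
by rewrite He Hf !subrr !mul0r addr0.
Qed.

Lemma down_ideal (R : comPzRingType) (e : R) : bool_ideal (down e).
Proof.
split.
- by move=> g [].
- by split; rewrite /Defs.idempotent mul0r.
- move=> g h [Hg Hge] [Hh Hhe]; split; first exact: idem_join.
  apply/eqP; rewrite -subr_eq0.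
  have -> : (g + h - g * h) * e - (g + h - g * h) =
    (g * e - g) + (h * e - h) - g * (h * e - h) by ring.
  by rewrite Hge Hhe !subrr mulr0 !addr0 subrr.
- move=> g k [Hg Hge] Hk Hkg; split => //.
  by rewrite -Hkg -mulrA Hge.
Qed.

Lemma idem_ideal (R : comPzRingType) : bool_ideal (@Defs.idempotent R).
Proof.
split => //.
- by rewrite /Defs.idempotent mul0r.
- by move=> e f; apply: idem_join.
Qed.

Lemma zero_ideal (R : comPzRingType) : bool_ideal (fun g : R => g = 0).
Proof.
split.
- by move=> e ->; rewrite /Defs.idempotent mul0r.
- by [].
- by move=> e f -> ->; rewrite mul0r !subr0 addr0.
- by move=> e g -> _; rewrite mulr0.
Qed.

Unset Implicit Arguments.
Definition vs : seq (int * int * int) := [:: (Posz 1, Posz 0, Posz 0); (Posz 0, Posz 0, Posz 1); (Posz 0, Posz 1, Posz 0); (Posz 0, Posz 1, Posz 1); (Posz 1, Negz 1, Posz 0); (Posz 1, Negz 1, Posz 2); (Posz 1, Negz 0, Negz 1); (Posz 1, Negz 0, Posz 0); (Posz 1, Negz 0, Posz 1); (Posz 1, Posz 0, Negz 1); (Posz 1, Posz 0, Negz 0); (Posz 1, Posz 0, Posz 1); (Posz 1, Posz 0, Posz 2); (Posz 1, Posz 1, Negz 0); (Posz 1, Posz 1, Posz 0); (Posz 1, Posz 2, Negz 1); (Posz 1, Posz 2, Posz 0); (Posz 1, Posz 2, Posz 1); (Posz 2, Negz 1, Negz 0); (Posz 2, Negz 0, Negz 1); (Posz 2, Negz 0,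 Posz 0); (Posz 2, Negz 0, Posz 1); (Posz 2, Posz 0, Negz 0); (Posz 2, Posz 0, Posz 1); (Posz 2, Posz 1, Negz 0); (Posz 2, Posz 1, Posz 0); (Posz 2, Posz 1, Posz 2); (Posz 2, Posz 2, Posz 1)].
Definition ctxs : seq (nat * nat * nat) := [:: (0, 1, 2); (1, 4, 25); (1, 7, 14); (1, 16, 20); (2, 9, 23); (2, 10, 11); (2, 12, 22); (3, 8, 24); (3, 13, 21); (5, 19, 27); (6, 8, 14); (8, 10, 17); (15, 18, 26)].
Definition ks_cert := (Node 1 (Leaf 1 0) (Node 7 (Leaf 3 0) (Node 2 (Leaf 1 4) (Node 5 (Leaf 2 0) (Leaf 10 8) (Node 8 (Leaf 3 8) (Leaf 13 11) (Node 3 (Leaf 1 7) (Leaf 16 21) (Node 4 (Leaf 2 11) (Leaf 9 21) (Node 9 (Node 6 (Leaf 2 23) (Node 12 (Leaf 15 23) (Leaf 18 12) (Leaf 26 4)) (Leaf 22 5)) (Leaf 19 11) (Leaf 27 7)))))) (Leaf 14 8)) (Leaf 24 4)) (Node 2 (Leaf 1 25) (Node 8 (Leaf 3 0) (Leaf 13 7) (Node 3 (Leaf 1 7) (Leaf 16 21) (Node 4 (Leaf 2 0) (Leaf 9 21) (Node 9 (Leaf 5 25) (Node 5 (Leaf 2 23) (Node 10 (Leaf 6 23) (Leaf 8 10) (Leaf 14 7)) (Leaf 11 19)) (Leaf 27 7))))) (Node 7 (Leaf 3 0) (Leaf 8 14) (Node 6 (Leaf 2 0) (Leaf 12 24) (Node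 3 (Leaf 1 14) (Node 8 (Leaf 3 24) (Node 5 (Leaf 2 22) (Node 9 (Leaf 5 22) (Leaf 19 16) (Node 4 (Leaf 2 10) (Leaf 9 27) (Node 12 (Leaf 15 23) (Leaf 18 14) (Leaf 26 10)))) (Leaf 11 13)) (Leaf 21 16)) (Node 11 (Leaf 8 24) (Node 12 (Leaf 15 20) (Leaf 18 14) (Leaf 26 10)) (Leaf 17 20))))))).

Definition e1 : v3 := (Posz 1, Posz 0, Posz 0).
Definition orthb (i j : nat) : bool := dotz (nth e1 vs i) (nth e1 vs j) == 0.
Definition ctx_okb (c : nat * nat * nat) : bool :=
  let u := nth e1 vs c.1.1 in let v := nth e1 vs c.1.2 in let w := nth e1 vs c.2 in
  [&& dotz u v == 0, dotz u w == 0, dotz v w == 0 & tri_ok u v w].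
Definition pos_okb : bool := all (fun v => 0 < dotz v v) vs.

Lemma ks_valid : [&& all ctx_okb ctxs, pos_okb & check ctxs orthb [:: 0%N] ks_cert].
Proof. by vm_compute. Qed.

Lemma vs_pos i : 0 < dotz (nth e1 vs i) (nth e1 vs i).
Proof.
case: (ltnP i (size vs)) => Hi; last by rewrite nth_default.
case/and3P: ks_valid => _ /allP H _; apply: H; exact: mem_nth.
Qed.

Lemma dotzC (u v : v3) : dotz u v = dotz v u.
Proof. by rewrite /dotz !(mulrC u.1.1) !(mulrC u.1.2) !(mulrC u.2). Qed.

Lemma Pv_e1 : Pv e1 = delta_mx 0 0.
Proof.
have H : cinv 1 = 1 by have := @cinvP 1 isT; rewrite mulr1n mul1r.
apply/matrixP => i j; rewrite !mxE /cN /= H mul1r /cv.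
case: i => [[|[|[|m]]] Hm] //; case: j => [[|[|[|m']]] Hm'] //=; by rewrite ?mulr0 ?mul0r ?mulr1.
Qed.
Section Pierce.
Variable F : RingLocFunctor.
Variable alpha : forall R : comPzRingType, Fobj F R -> (R -> Prop).
Hypothesis Hid : forall (R : comPzRingType) x, bool_ideal (alpha R x).
Hypothesis Hinj : forall (R : comPzRingType) x y, (forall e, alpha R x e <-> alpha R y e) -> x = y.
Hypothesis Hsurj : forall (R : comPzRingType) (I : R -> Prop), bool_ideal I ->
          exists x, forall e, alpha R x e <-> I e.
Hypothesis Htop : forall (R : comPzRingType) e, alpha R (ftop _) e <-> Defs.idempotent e.
Hypothesis Hmeet : forall (R : comPzRingType) x y e,
              alpha R (fmeet x y) e <-> (alpha R x e /\ alpha R y e).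
Hypothesis Hjoin : forall (R : comPzRingType) (S : Fobj F R -> Prop) e,
              alpha R (fjoin S) e <-> ideal_gen (fun u => exists x, S x /\ alpha R x u) e.
Hypothesis Hnat : forall (R S : comPzRingType) (f : {rmorphism R -> S}) x e,
          alpha S (@Fmap F R S f x) e <-> pierce_map f (alpha R x) e.

Set Implicit Arguments.

Definition xe (R : comPzRingType) (e : R) : Fobj F R :=
  proj1_sig (constructive_indefinite_description _ (Hsurj _ _ (down_ideal e))).


Lemma alpha_xe (R : comPzRingType) (e g : R) : alpha R (xe e) g <-> down e g.
Proof. exact: (proj2_sig (constructive_indefinite_description _ (Hsurj _ _ (down_ideal e)))). Qed.

Lemma alpha_bot (R : comPzRingType) (g : R) : alpha R (fbot _) g <-> g = 0.
Proof.
rewrite /fbot Hjoin; split.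
- by move=> H; apply: (H (fun h => h = 0)); [exact: zero_ideal| move=> u [x []]].
- by move=> -> J [].
Qed.

Lemma pierce_down (R S : comPzRingType) (f : {rmorphism R -> S}) (e : R) (g : S) :
  Defs.idempotent e -> pierce_map f (down e) g <-> down (f e) g.
Proof.
move=> He; split.
- move=> H; apply: H; first exact: down_ideal.
  move=> u [i [[Hi Hie] ->]]; split; first by rewrite /Defs.idempotent -rmorphM Hi.
  by rewrite -rmorphM Hie.
- move=> [Hg Hge] J [J1 J2 J3 J4] HJ.
  apply: (J4 (f e)) => //; apply: HJ; exists e; split => //.
Qed.

Lemma Fmap_xe (R S : comPzRingType) (f : {rmorphism R -> S}) (e : R) :
  Defs.idempotent e -> Fmap f (xe e) = xe (f e).
Proof.
move=> He; apply: Hinj => g; rewrite Hnat alpha_xe.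
have -> : alpha R (xe e) = down e.
  by apply: functional_extensionality => h; apply: propositional_extensionality; exact: alpha_xe.
exact: pierce_down.
Qed.

Lemma ev_idem k (i : 'I_k) : Defs.idempotent (ev i).
Proof. by apply/ffunP => j; rewrite !ffunE; case: (j == i); rewrite ?mulr1 ?mulr0. Qed.

Lemma ev_orth k (i j : 'I_k) : i != j -> ev i * ev j = 0.
Proof.
move=> Hij; apply/ffunP => l; rewrite !ffunE.
case: (eqVneq l i) => [->|_]; last by rewrite mul0r.
by rewrite (negbTE Hij) mulr0.
Qed.

Lemma ev_sum k : \sum_i ev i = 1 :> D k.
Proof.
apply/ffunP => j; rewrite sum_ffunE !ffunE (bigD1 j) //= ffunE eqxx big1 ?addr0 //.
by move=> i Hi; rewrite ffunE eq_sym (negbTE Hi).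
Qed.

Lemma top_Dk k : ftop (Fobj F (D k)) = fjoin (fun z => exists i, z = xe (ev i)).
Proof.
apply: Hinj => g; rewrite Htop Hjoin; split.
- move=> Hg J HJ Hgen.
  have Jev : forall i, J (ev i).
    move=> i; apply: Hgen; exists (xe (ev i)); split; first by exists i.
    by apply/alpha_xe; split; [exact: ev_idem| exact: ev_idem].
  case: HJ => J1 J2 J3 J4.
  have Js : forall s : seq 'I_k, uniq s -> J (\sum_(i <- s) ev i).
    elim=> [|x s IH] /=; first by rewrite big_nil.
    case/andP=> Hx Hu; rewrite big_cons.
    have Hp : ev x * \sum_(i <- s) ev i = 0.
      rewrite mulr_sumr big1_seq // => i /andP[_ Hi].
      by apply: ev_orth; apply: contraNneq Hx => ->.
    by have := J3 _ _ (Jev x) (IH Hu); rewrite Hp subr0.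
  apply: (J4 (\sum_(i <- enum 'I_k) ev i)); first exact: Js (enum_uniq _).
    by [].
  by rewrite big_enum /= ev_sum mulr1.
- move=> H; apply: (H (@Defs.idempotent _)); first exact: idem_ideal.
  by move=> u [x [_ Hx]]; case: (Hid _ x) => H1 _ _ _; apply: H1.
Qed.

Lemma meet_Dk k (i j : 'I_k) : i != j -> fmeet (xe (ev i)) (xe (ev j)) = fbot _.
Proof.
move=> Hij; apply: Hinj => g; rewrite Hmeet !alpha_xe alpha_bot; split.
- move=> [[Hg Hgi] [_ Hgj]].
  by rewrite -Hgj -Hgi -mulrA ev_orth // mulr0.
- by move=> ->; split; split; rewrite /Defs.idempotent ?mul0r.
Qed.

Section Fm.
Variables (A B : pzRingType) (f : {rmorphism A -> B}).
Lemma Fmap_top : Fmap f (ftop (Fobj F A)) = ftop _.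
Proof. by case: (Fmap_hom F f). Qed.
Lemma Fmap_meet (x y : Fobj F A) : Fmap f (fmeet x y) = fmeet (Fmap f x) (Fmap f y).
Proof. by case: (Fmap_hom F f). Qed.
Lemma Fmap_join (S : Fobj F A -> Prop) : Fmap f (fjoin S) = fjoin (fun y => exists x, S x /\ y = Fmap f x).
Proof. by case: (Fmap_hom F f). Qed.
Lemma Fmap_bot : Fmap f (fbot (Fobj F A)) = fbot _.
Proof.
rewrite /fbot Fmap_join; apply: fle_antisym; apply/fjoin_lub.
- by move=> y [x []].
- by [].
Qed.
End Fm.

Definition a (A : pzRingType) (Q : A) : Fobj F A := Fmap (psi Q) (xe (ev (ord0 : 'I_2))).

Definition hmap k (i : 'I_k) (c : D 2) : D k :=
  [ffun j => if j == i then c ord0 else c ord_max].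


Lemma hmap_zmod k (i : 'I_k) : GRing.zmod_morphism (hmap i).
Proof. by move=> c d; apply/ffunP => j; rewrite !ffunE; case: (j == i). Qed.
Lemma hmap_monoid k (i : 'I_k) : GRing.monoid_morphism (hmap i).
Proof.
split; first by apply/ffunP => j; rewrite !ffunE; case: (j == i).
by move=> c d; apply/ffunP => j; rewrite !ffunE; case: (j == i).
Qed.
HB.instance Definition _ k (i : 'I_k) :=
  GRing.isZmodMorphism.Build (D 2) (D k) (hmap i) (hmap_zmod i).
HB.instance Definition _ k (i : 'I_k) :=
  GRing.isMonoidMorphism.Build (D 2) (D k) (hmap i) (hmap_monoid i).

Lemma a_ctx (A : pzRingType) k (Q : 'I_k -> A) (H : ofam Q) i :
  a (Q i) = Fmap (phi H) (xe (ev i)).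
Proof.
have Hi : Q i * Q i = Q i by case: H.
have Hs : \sum_(j | j != i) Q j = 1 - Q i.
  by case: H => _ _; rewrite (bigD1 i) //= => <-; rewrite addrC addrK.
rewrite /a (Fmap_comp (g := phi H) (f := hmap i)).
  rewrite Fmap_xe; last exact: ev_idem.
  congr (Fmap _ (xe _)); apply/ffunP => j; rewrite !ffunE.
  by case: (j == i).
move=> c /=; rewrite /psi /= /phi big_ord_recl big_ord1 /fam2 /=.
rewrite /idem_fix Hi eqxx (bigD1 i) //= ffunE eqxx; congr (_ + _).
rewrite -Hs mulrz_suml; apply: eq_bigr => j /negbTE Hj.
  by rewrite /hmap ffunE Hj; congr (_ *~ c _); exact: val_inj.
Qed.

Lemma ctx_top (A : pzRingType) k (Q : 'I_k -> A) (H : ofam Q) :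
  fle (ftop _) (fjoin (fun z => exists i, z = a (Q i))).
Proof.
rewrite -(Fmap_top (phi H)) top_Dk Fmap_join; apply/fjoin_lub => y [x [[i ->] ->]].
by apply: fle_join; exists i; rewrite a_ctx.
Qed.

Lemma ctx_meet (A : pzRingType) k (Q : 'I_k -> A) (H : ofam Q) i j :
  i != j -> fmeet (a (Q i)) (a (Q j)) = fbot _.
Proof. by move=> Hij; rewrite !(a_ctx H) -Fmap_meet meet_Dk // Fmap_bot. Qed.

Definition orth2 (A : pzRingType) (P Q : A) := P * Q = 0 /\ Q * P = 0.
Definition idm (A : pzRingType) (P : A) := P * P = P.

Definition fam4 (A : pzRingType) (Q1 Q2 Q3 Q4 : A) (i : 'I_4) : A :=
  nth 0 [:: Q1; Q2; Q3; Q4] i.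

Lemma fam4_ofam (A : pzRingType) (Q1 Q2 Q3 Q4 : A) :
  idm Q1 -> idm Q2 -> idm Q3 -> idm Q4 ->
  orth2 Q1 Q2 -> orth2 Q1 Q3 -> orth2 Q1 Q4 -> orth2 Q2 Q3 -> orth2 Q2 Q4 -> orth2 Q3 Q4 ->
  Q1 + Q2 + Q3 + Q4 = 1 -> ofam (fam4 Q1 Q2 Q3 Q4).
Proof.
move=> H1 H2 H3 H4 [O12 O21] [O13 O31] [O14 O41] [O23 O32] [O24 O42] [O34 O43] Hs.
split.
- by case=> [[|[|[|[|m]]]] Hm] //=.
- case=> [[|[|[|[|m]]]] Hm] //; case=> [[|[|[|[|m']]]] Hm'] //=.
- by rewrite !big_ord_recl big_ord0 /fam4 /= addr0 !addrA.
Qed.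

Lemma ctx4 (A : pzRingType) (Q1 Q2 Q3 Q4 : A) :
  idm Q1 -> idm Q2 -> idm Q3 -> idm Q4 ->
  orth2 Q1 Q2 -> orth2 Q1 Q3 -> orth2 Q1 Q4 -> orth2 Q2 Q3 -> orth2 Q2 Q4 -> orth2 Q3 Q4 ->
  Q1 + Q2 + Q3 + Q4 = 1 ->
  fle (ftop _) (fjoin (fun z => z = a Q1 \/ z = a Q2 \/ z = a Q3 \/ z = a Q4)) /\
  fmeet (a Q1) (a Q2) = fbot _.
Proof.
move=> H1 H2 H3 H4 O12 O13 O14 O23 O24 O34 Hs.
have H := fam4_ofam H1 H2 H3 H4 O12 O13 O14 O23 O24 O34 Hs.
split.
- apply: fle_trans (ctx_top H) _; apply/fjoin_lub => z [i ->].
  apply: fle_join; case: i => [[|[|[|[|m]]]] Hm] //=; rewrite /fam4 /=; tauto.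
- by have := ctx_meet H (i := ord0) (j := Ordinal (isT : (1 < 4)%N)) isT.
Qed.

Lemma fmeet_idem (L : Frame) (x : L) : fmeet x x = x.
Proof.
apply: fle_antisym; first exact: fmeet_l.
by apply/fmeet_glb; split; apply: fle_refl.
Qed.

Lemma idm_compl (A : pzRingType) (E : A) : idm E -> idm (1 - E) /\ orth2 E (1 - E).
Proof.
rewrite /idm /orth2 => HE.
have H1 : E * (1 - E) = 0 by rewrite mulrBr mulr1 HE subrr.
have H2 : (1 - E) * E = 0 by rewrite mulrBl mul1r HE subrr.
by split => //; rewrite mulrBl mul1r H1 subr0.
Qed.

Lemma idm0 (A : pzRingType) : idm (0 : A). Proof. by rewrite /idm mul0r. Qed.
Lemma orth0 (A : pzRingType) (P : A) : orth2 P 0. Proof. by rewrite /orth2 mul0r mulr0. Qed.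

Lemma idm_add (A : pzRingType) (P Q : A) : idm P -> idm Q -> orth2 P Q -> idm (P + Q).
Proof.
rewrite /idm => HP HQ [O1 O2].
by rewrite mulrDl !mulrDr HP HQ O1 O2 addr0 add0r.
Qed.

Lemma pair_meet (A : pzRingType) (P Q : A) : idm P -> idm Q -> orth2 P Q ->
  fmeet (a P) (a Q) = fbot _.
Proof.
move=> HP HQ O.
have HPQ := idm_add HP HQ O.
have [HR [OR1 OR2]] := idm_compl HPQ.
have E : 1 - (P + Q) = 1 - P - Q by rewrite opprD addrA.
rewrite E in HR OR1 OR2.
have OPR : orth2 P (1 - P - Q).
  case: O => O1 O2; split.
    by rewrite !mulrBr mulr1 HP O1 subr0 subrr.
  by rewrite !mulrBl mul1r HP O2 subrr subr0.
have OQR : orth2 Q (1 - P - Q).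
  case: O => O1 O2; split.
    by rewrite !mulrBr mulr1 O2 HQ subr0 subrr.
  by rewrite !mulrBl mul1r O1 HQ subr0 subrr.
have Hs : P + Q + (1 - P - Q) + 0 = 1.
  by rewrite -E addr0 addrC subrK.
by case: (ctx4 HP HQ HR (idm0 A) O OPR (orth0 P) OQR (orth0 Q) (orth0 _) Hs).
Qed.

Lemma a0_bot (A : pzRingType) : fle (a (0 : A)) (fbot _).
Proof.
by rewrite -(pair_meet (idm0 A) (idm0 A) (orth0 0)) fmeet_idem; apply: fle_refl.
Qed.

Lemma sum_bot (A : pzRingType) (P Q : A) : idm P -> idm Q -> orth2 P Q ->
  fle (a P) (fbot _) -> fle (a Q) (fbot _) -> fle (a (P + Q)) (fbot _).
Proof.
move=> HP HQ O BP BQ.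
have HPQ := idm_add HP HQ O.
have [HR ORc] := idm_compl HPQ.
have E : 1 - (P + Q) = 1 - P - Q by rewrite opprD addrA.
have ORc' := ORc; rewrite E in HR ORc'.
have M := pair_meet HPQ HR ORc'.
have OPR : orth2 P (1 - P - Q).
  case: O => O1 O2; split.
    by rewrite !mulrBr mulr1 HP O1 subr0 subrr.
  by rewrite !mulrBl mul1r HP O2 subrr subr0.
have OQR : orth2 Q (1 - P - Q).
  case: O => O1 O2; split.
    by rewrite !mulrBr mulr1 O2 HQ subr0 subrr.
  by rewrite !mulrBl mul1r O1 HQ subr0 subrr.
have Hs : P + Q + (1 - P - Q) + 0 = 1.
  by rewrite -E addr0 addrC subrK.
case: (ctx4 HP HQ HR (idm0 A) O OPR (orth0 P) OQR (orth0 Q) (orth0 _) Hs) => Ht _.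
apply: (meet_top_le Ht) => z [->|[->|[->|->]]].
- exact: fle_trans (fmeet_r _ _) BP.
- exact: fle_trans (fmeet_r _ _) BQ.
- by rewrite M; apply: fle_refl.
- exact: fle_trans (fmeet_r _ _) (a0_bot A).
Qed.

Lemma one_bot (A : pzRingType) : fle (a (1 : A)) (fbot _) -> ftop (Fobj F A) = fbot _.
Proof.
move=> B1; apply: fle_bot_eq.
have H1 : idm (1 : A) by rewrite /idm mul1r.
have Hs : 1 + 0 + 0 + 0 = 1 :> A by rewrite !addr0.
case: (ctx4 H1 (idm0 A) (idm0 A) (idm0 A) (orth0 1) (orth0 1) (orth0 1) (orth0 0) (orth0 0) (orth0 0) Hs) => Ht _.
apply: (meet_top_le Ht) => z [->|[->|[->|->]]]; apply: fle_trans (fmeet_r _ _) _ => //;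
  exact: a0_bot.
Qed.


Lemma fmeet_top (L : Frame) (x : L) : fmeet x (ftop L) = x.
Proof.
apply: fle_antisym; first exact: fmeet_l.
by apply/fmeet_glb; split; [apply: fle_refl| apply: ftop_max].
Qed.

Section KS.
Variables (n : nat) (f : 'I_3 -> 'I_n).
Hypothesis finj : injective f.

Lemma idm_emb (P : 'M[Cplx]_3) : P *m P = P -> idm (emb f P : 'M[Cplx]_n).
Proof. by move=> H; rewrite /idm -mulmxE emb_mul // H. Qed.

Lemma orth_emb (P Q : 'M[Cplx]_3) : P *m Q = 0 -> Q *m P = 0 ->
  orth2 (emb f P : 'M[Cplx]_n) (emb f Q).
Proof. by move=> H1 H2; rewrite /orth2 -!mulmxE !emb_mul // H1 H2 emb0. Qed.

Definition Dm : 'M[Cplx]_n := emb f 1%:M.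

Lemma idm_D : idm Dm.
Proof. by apply: idm_emb; rewrite mulmx1. Qed.

Lemma orth_D (P : 'M[Cplx]_3) : orth2 (emb f P) (1 - Dm).
Proof.
rewrite /orth2 mulrBr mulrBl mulr1 mul1r /Dm -!mulmxE !emb_mul //.
by rewrite mulmx1 mul1mx !subrr.
Qed.

Lemma KS_ctx u v w : 0 < dotz u u -> 0 < dotz v v -> 0 < dotz w w ->
  dotz u v = 0 -> dotz u w = 0 -> dotz v w = 0 -> tri_ok u v w ->
  fle (ftop _) (fjoin (fun z => z = a (emb f (Pv u)) \/ z = a (emb f (Pv v)) \/
                               z = a (emb f (Pv w)) \/ z = a (1 - Dm))).
Proof.
move=> Hu Hv Hw Huv Huw Hvw Ht.
have O : forall x y, dotz x y = 0 -> orth2 (emb f (Pv x)) (emb f (Pv y)).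
  by move=> x y Hxy; apply: orth_emb; apply: Pv_orth => //; rewrite dotzC.
have [HR _] := idm_compl idm_D.
have Hs : emb f (Pv u) + emb f (Pv v) + emb f (Pv w) + (1 - Dm) = 1.
  by rewrite -!emb_add Pv_tri // -/Dm addrC subrK.
by case: (ctx4 (idm_emb (Pv_idm Hu)) (idm_emb (Pv_idm Hv)) (idm_emb (Pv_idm Hw)) HR
  (O _ _ Huv) (O _ _ Huw) (orth_D _) (O _ _ Hvw) (orth_D _) (orth_D _) Hs).
Qed.

Lemma KS_delta : fle (a (delta_mx (f 0) (f 0) : 'M[Cplx]_n)) (fbot _).
Proof.
have [HR _] := idm_compl idm_D.
have Hidm : forall i, idm (emb f (Pv (nth e1 vs i))) by move=> i; apply/idm_emb/Pv_idm/vs_pos.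
case/and3P: ks_valid => /allP Hc _ Hk.
pose a' := fun i => a (emb f (Pv (nth e1 vs i))).
have Hctx : forall c, c \in ctxs ->
  fle (ftop _) (fjoin (fun z => z = a' c.1.1 \/ z = a' c.1.2 \/ z = a' c.2 \/ z = a (1 - Dm))).
  move=> c /Hc; rewrite /ctx_okb => /and4P[/eqP H1 /eqP H2 /eqP H3 H4].
  by apply: KS_ctx => //; apply: vs_pos.
have Horth : forall i j, orthb i j -> fle (fmeet (a' i) (a' j)) (fbot _).
  move=> i j /eqP Hij; rewrite /a' (pair_meet (Hidm i) (Hidm j)); first exact: fle_refl.
  by apply: orth_emb; apply: Pv_orth => //; rewrite dotzC.
have Hr : forall i, fle (fmeet (a' i) (a (1 - Dm))) (fbot _).
  by move=> i; rewrite /a' (pair_meet (Hidm i) HR (orth_D _)); apply: fle_refl.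
have := check_sound Hctx Horth Hr (t := ks_cert) (S := [:: 0%N]) ltac:(by []) Hk.
by rewrite /meetS /= fmeet_top /a' /= -emb_delta // -Pv_e1.
Qed.
End KS.

Lemma main_M k : ftop (Fobj F 'M[Cplx]_k.+3) = fbot _.
Proof.
have H3 : (3 <= k.+3)%N by [].
have Hd : forall m : 'I_k.+3, fle (a (delta_mx m m : 'M[Cplx]_k.+3)) (fbot _).
  move=> m.
  pose f := fun x : 'I_3 => tperm ord0 m (widen_ord H3 x).
  have finj : injective f.
    by move=> x y /perm_inj /(congr1 val) /= Hv; apply: val_inj.
  have -> : m = f 0 by rewrite /f (_ : widen_ord H3 0 = ord0) ?tpermL //; exact: val_inj.
  exact: KS_delta.
have Hs : forall s : seq 'I_k.+3, uniq s ->
    idm (\sum_(m <- s) delta_mx m m : 'M[Cplx]_k.+3) /\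
    fle (a (\sum_(m <- s) delta_mx m m : 'M[Cplx]_k.+3)) (fbot _).
  elim=> [|x s IH] /=; first by rewrite big_nil; split; [apply: idm0|apply: a0_bot].
  case/andP=> Hx /IH [Hi Hb]; rewrite big_cons.
  have Hdx : idm (delta_mx x x : 'M[Cplx]_k.+3).
    by rewrite /idm -mulmxE mul_delta_mx.
  have O : orth2 (delta_mx x x : 'M[Cplx]_k.+3) (\sum_(m <- s) delta_mx m m).
    split.
      rewrite mulr_sumr big1_seq // => i /andP[_ Hi'].
      rewrite -mulmxE mul_delta_mx_cond (_ : (x == i) = false) ?mulr0n //.
      by apply/negbTE; apply: contraNneq Hx => ->.
    rewrite mulr_suml big1_seq // => i /andP[_ Hi'].
    rewrite -mulmxE mul_delta_mx_cond (_ : (i == x) = false) ?mulr0n //.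
    by apply/negbTE; apply: contraNneq Hx => <-.
  split; first exact: idm_add.
  exact: sum_bot.
apply: one_bot.
have [_ Hb] := Hs _ (enum_uniq 'I_k.+3).
by move: Hb; rewrite big_enum /= -mx1_sum_delta.
Qed.
End Pierce.

Theorem mainTheorem11 (F : RingLocFunctor) (HF : restricts_to_pierce F) :
  (forall R : pzRingType, kochen_specker R -> locale_trivial (Fobj F R)) /\
  (forall n : nat, (3 <= n)%nat -> locale_trivial (Fobj F 'M[Cplx]_n)).
Proof.
case: HF => alpha [Hid Hinj Hsurj [Htop Hmeet Hjoin] Hnat].
have HM : forall n, (3 <= n)%N -> locale_trivial (Fobj F 'M[Cplx]_n).
  case=> [|[|[|k]]] // _; rewrite /locale_trivial.
  exact: (main_M Hid Hinj Hsurj Htop Hmeet Hjoin Hnat k).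
split => //.
move=> R [n [Hn [g]]]; rewrite /locale_trivial.
by rewrite -(Fmap_top F g) (HM n Hn) Fmap_bot.
Qed.
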